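(* For every integer $n\ge1$, the set $S_2^{(n)}=\{k\in\mathbb{R}\setminus B_n : E_{(a^{(n)}_{k,2},\,b^{(n)}_{k,2})} \text{ is defined over } \mathbb{Q}\}$ is countable.
   Context: Define $f_m,g_m\in\mathbb{Z}[T]$ by $f_0=0,f_1=1,g_0=2,g_1=T$, $f_m=Tf_{m-1}+f_{m-2}$, $g_m=Tg_{m-1}+g_{m-2}$, and set $F_n=f_{n+1}-f_n$, $G_n=g_{n+1}-g_n$. Let $B_n=\{k\in\mathbb{R}: F_n(k)-1=0 \text{ or } G_n(k)-k+2=0\}$. For $k\notin B_n$, the singular $k$-FL pair of level $n$ of Type 2 is $a^{(n)}_{k,2}=-\frac{27(F_n(k)-1)^2}{4(G_n(k)-k+2)^2}$, $b^{(n)}_{k,2}=\frac{27(F_n(k)-1)^3}{4(G_n(k)-k+2)^3}$. For real $a,b$, $E_{(a,b)}$ is the plane curve $y^2=x^3+ax+b$; it is defined over $\mathbb{Q}$ exactly when $a,b\in\mathbb{Q}$. *)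

(* Defs.v *)
From HB Require Import structures.
From mathcomp Require Import all_boot all_order all_algebra.
From mathcomp Require Import classical_sets cardinality reals.
Set Implicit Arguments. Unset Strict Implicit. Unset Printing Implicit Defensive.
Import Order.TTheory GRing.Theory Num.Theory.
Local Open Scope ring_scope.

(* fpair m = (f_m, f_{m+1}),  f_0 = 0, f_1 = 1, f_m = T f_{m-1} + f_{m-2} *)
Fixpoint fpair (m : nat) : {poly int} * {poly int} :=
  match m with
  | O => (0, 1)
  | S m' => let: (a, b) := fpair m' in (b, 'X * b + a)
  end.
(* gpair m = (g_m, g_{m+1}),  g_0 = 2, g_1 = T *)
Fixpoint gpair (m : nat) : {poly int} * {poly int} :=
  match m with
  | O => (2%:P, 'X)
  | S m' => let: (a, b) := gpair m' in (b, 'X * b + a)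
  end.

Definition fpoly (m : nat) : {poly int} := (fpair m).1.
Definition gpoly (m : nat) : {poly int} := (gpair m).1.

Definition Fpoly (n : nat) : {poly int} := fpoly n.+1 - fpoly n.
Definition Gpoly (n : nat) : {poly int} := gpoly n.+1 - gpoly n.

Definition evalZ (R : realType) (p : {poly int}) (x : R) : R :=
  (map_poly (fun z : int => z%:~R) p).[x].

Definition Fn (R : realType) (n : nat) (k : R) : R := evalZ (Fpoly n) k.
Definition Gn (R : realType) (n : nat) (k : R) : R := evalZ (Gpoly n) k.

Definition Bset (R : realType) (n : nat) : set R :=
  [set k | Fn n k - 1 = 0 \/ Gn n k - k + 2 = 0].

Definition a2 (R : realType) (n : nat) (k : R) : R :=
  - (27 * (Fn n k - 1) ^+ 2) / (4 * (Gn n k - k + 2) ^+ 2).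
Definition b2 (R : realType) (n : nat) (k : R) : R :=
  (27 * (Fn n k - 1) ^+ 3) / (4 * (Gn n k - k + 2) ^+ 3).

Definition is_rat (R : realType) (x : R) : Prop := exists q : rat, x = ratr q.

(* E_(a,b) is defined over Q iff a, b are rational *)
Definition defined_over_Q (R : realType) (a b : R) : Prop := is_rat a /\ is_rat b.

Definition S2 (R : realType) (n : nat) : set R :=
  [set k | ~ Bset n k /\ defined_over_Q (a2 n k) (b2 n k)].

(* Main.v *)
Require Import Defs.
From mathcomp Require Import all_boot all_order all_algebra.
From mathcomp Require Import classical_sets cardinality reals.
From mathcomp Require Import polyrcf zify ring.
Import Order.TTheory GRing.Theory Num.Theory.
Local Open Scope ring_scope.

Lemma fpair_coef m :
  (forall i, (m <= i)%N -> (fpair m).1`_i = 0) /\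
  (forall i, (m.+1 <= i)%N -> (fpair m).2`_i = 0).
Proof.
elim: m => [|m IH] /=.
  split=> i Hi; first by rewrite coef0.
  by rewrite coef1; case: i Hi.
case: (fpair m) IH => a b /= [Ha Hb]; split; first exact: Hb.
move=> i Hi; rewrite coefD coefXM.
case: i Hi => [//|i] Hi /=.
by rewrite Hb // Ha ?addr0 //; lia.
Qed.

Lemma gpair_coef m :
  (forall i, (m < i)%N -> (gpair m).1`_i = 0) /\
  (forall i, (m.+1 < i)%N -> (gpair m).2`_i = 0) /\ (gpair m).2`_m.+1 = 1.
Proof.
elim: m => [|m IH] /=.
  split; first by move=> i Hi; rewrite coefC; case: i Hi.
  split; last by rewrite coefX.
  by move=> i Hi; rewrite coefX; case: i Hi => [|[|]].
case: (gpair m) IH => a b /= [Ha [Hb Hb1]]; split; first exact: Hb.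
split.
  move=> i Hi; rewrite coefD coefXM.
  case: i Hi => [//|i] Hi /=.
  by rewrite Hb // Ha ?addr0 //; lia.
rewrite coefD coefXM /= Hb1 Ha ?addr0 //.
Qed.

Lemma Fpoly_top n : (Fpoly n)`_n.+1 = 0.
Proof.
rewrite /Fpoly coefB /fpoly /=.
have [H1 H2] := fpair_coef n.
case: (fpair n) H1 H2 => a b /= H1 H2.
by rewrite H2 // H1 // subr0.
Qed.

Lemma Gpoly_top n : (Gpoly n)`_n.+1 = 1.
Proof.
rewrite /Gpoly coefB /gpoly /=.
have [H1 [H2 H3]] := gpair_coef n.
case: (gpair n) H1 H2 H3 => a b /= H1 H2 H3.
by rewrite H3 H1 // subr0.
Qed.

Section P.
Variable R : realType.

Definition Pt (n : nat) (t : R) : {poly R} :=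
  (map_poly (fun z : int => z%:~R) (Fpoly n) - 1) -
  t%:P * (map_poly (fun z : int => z%:~R) (Gpoly n) - 'X + 2%:P).

Lemma Pt_eval n t k : (Pt n t).[k] = (Fn n k - 1) - t * (Gn n k - k + 2).
Proof. by rewrite /Pt /Fn /Gn /evalZ !hornerE. Qed.

Lemma Pt_neq0 n t : (1 <= n)%N -> t != 0 -> Pt n t != 0.
Proof.
move=> n1 t0; apply/eqP => /(congr1 (fun p : {poly R} => p`_n.+1)).
rewrite /Pt coefB coefB coefCM !coefD coefN coefX coefC coef1.
rewrite !coef_map_id0 ?mulr0z // Fpoly_top Gpoly_top.
have -> : (n.+1 == 1%N) = false by case: n n1.
rewrite /= subr0 addr0 subr0 coef0 => /eqP.
by rewrite (_ : (0:int)%:~R = 0 :> R) // (_ : (1:int)%:~R = 1 :> R) // mulr1 sub0r oppr_eq0 (negbTE t0).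
Qed.
End P.

Theorem theorem3p15 (R : realType) (n : nat) :
  (1 <= n)%N -> countable (@S2 R n).
Proof.
move=> n1.
have sub : (@S2 R n `<=` \bigcup_(q in [set: rat]) [set` rootsR (@Pt R n (ratr q))])%classic.
  move=> k [nB [[qa Ha] [qb Hb]]].
  have u0 : Fn n k - 1 != 0 by apply/eqP => h; apply: nB; left.
  have v0 : Gn n k - k + 2 != 0 by apply/eqP => h; apply: nB; right.
  exists (- qb / qa) => //=.
  have a0 : a2 n k != 0.
    rewrite /a2 mulNr oppr_eq0 mulf_neq0 ?invr_eq0 ?mulf_neq0 ?expf_neq0 //.
    by rewrite pnatr_eq0. by rewrite pnatr_eq0.
  have ratE : ratr (- qb / qa) = (Fn n k - 1) / (Gn n k - k + 2) :> R.
    rewrite rmorphM rmorphN fmorphV /= -Ha -Hb /a2 /b2.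
    move: u0 v0; set u := Fn n k - 1; set v := Gn n k - k + 2 => u0 v0.
    field; rewrite u0 v0 /=; by [].
  have t0 : ratr (- qb / qa) != 0 :> R by rewrite ratE mulf_neq0 ?invr_eq0.
  rewrite -(roots_on_rootsR (@Pt_neq0 R n _ n1 t0)) in_itv /=.
  rewrite /root Pt_eval ratE divfK //; exact/eqP/subrr.
apply: (sub_countable (subset_card_le sub)).
apply: bigcup_countable; first exact: countableP.
move=> q _; apply: finite_set_countable; exact: finite_seq.
Qed.
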